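(* There exist an $\omega$-power-free infinite word $x$ over an infinite alphabet and a $k\in\mathbb{N}$ such that $\mathrm{AP}(x,k)$ is empty.
   Context: A factor is a contiguous subword; $u^\ell$ is $\ell$ concatenated copies of $u$. A word is $\omega$-power-free if for every finite (nonempty) factor $u$ there exists $\ell\in\mathbb{N}$ such that $u^\ell$ is not a factor. A $k$-anti-power is a word $w=w_1\cdots w_k$ with $|w_1|=\cdots=|w_k|$ and $w_1,\dots,w_k$ pairwise distinct. $\mathrm{AP}(x,k)$ is the set of $m\in\mathbb{N}=\{1,2,\dots\}$ such that the prefix of $x$ of length $km$ is a $k$-anti-power. *)

(* Defs.v *)
From mathcomp Require Import all_boot.
Set Implicit Arguments. Unset Strict Implicit. Unset Printing Implicit Defensive.

(* Infinite words over the (infinite) alphabet nat are functions nat -> nat;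
   finite words are seq nat. *)
Definition iword := nat -> nat.

Definition subword (x : iword) (i n : nat) : seq nat := mkseq (fun j => x (i + j)) n.

Definition prefix_of (x : iword) (n : nat) : seq nat := subword x 0 n.

Definition factor (x : iword) (u : seq nat) : Prop :=
  exists i, u = subword x i (size u).

Definition wpow (u : seq nat) (l : nat) : seq nat := flatten (nseq l u).

Definition omega_power_free (x : iword) : Prop :=
  forall u : seq nat, u != [::] -> factor x u -> exists l : nat, ~ factor x (wpow u l).

Definition anti_power (k : nat) (w : seq nat) : Prop :=
  exists m : nat, size w = k * m /\
    uniq [seq take m (drop (i * m) w) | i <- iota 0 k].

(* m \in AP(x,k)  (m ranges over N = {1,2,...}) *)
Definition AP (x : iword) (k m : nat) : Prop :=
  0 < m /\ anti_power k (prefix_of x (k * m)).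

(* Main.v *)
Require Import Defs.
From mathcomp Require Import all_boot.
From mathcomp Require Import zify.

Lemma wpow_mem (u : seq nat) l a : a \in wpow u l -> a \in u.
Proof. by elim: l => [|l IH] //=; rewrite /wpow /= mem_cat => /orP [|/IH]. Qed.

Lemma wpow_size (u : seq nat) l : size (wpow u l) = size u * l.
Proof. elim: l => [|l IH]; first by rewrite muln0. by rewrite /wpow /= size_cat -/(wpow u l) IH mulnS. Qed.

Lemma le_foldr_max a (u : seq nat) : a \in u -> a <= foldr maxn 0 u.
Proof.
elim: u => [|b u IH] //=; rewrite in_cons => /orP [/eqP ->|/IH H].
  exact: leq_maxl.
exact: leq_trans H (leq_maxr _ _).
Qed.

Definition xw : iword := fun n => trunc_log 2 n.

Lemma xw_pf : omega_power_free xw.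
Proof.
move=> u u0 _.
set M := foldr maxn 0 u.
exists (2 ^ M.+1).+1 => -[i Hi].
have su : 0 < size u by case: u u0 {M Hi}.
set q := 2 ^ M.+1.
have Hq : q < size (wpow u (2 ^ M.+1).+1).
  rewrite wpow_size; apply: leq_trans (leq_pmull _ su); done.
have Hn : nth 0 (wpow u (2 ^ M.+1).+1) q \in u by apply: wpow_mem (mem_nth 0 Hq).
have := le_foldr_max _ _ Hn; rewrite -/M Hi /subword nth_mkseq; last exact: Hq.
rewrite /xw -/M => H.
have : M.+1 <= trunc_log 2 (i + q) by apply: trunc_log_max => //; rewrite leq_addl.
by rewrite ltnNge H.
Qed.

Lemma block_eq m N j : j * m + m <= N ->
  take m (drop (j * m) (mkseq xw N)) = mkseq (fun t => xw (j * m + t)) m.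
Proof.
move=> H; apply: (@eq_from_nth _ 0).
  by rewrite size_takel ?size_mkseq // size_drop size_mkseq; lia.
move=> t; rewrite size_takel ?size_drop ?size_mkseq => [Ht'|]; last lia.
by rewrite nth_take // nth_drop nth_mkseq ?nth_mkseq //; lia.
Qed.

Theorem theorem3p7 :
  exists (x : iword) (k : nat), 0 < k /\ omega_power_free x /\ (forall m : nat, ~ AP x k m).
Proof.
exists xw, 11; split => //; split; first exact: xw_pf.
move=> m [m0 [m' [Hs Hu]]].
rewrite /prefix_of /subword size_mkseq in Hs.
have E : m' = m by lia.
subst m'.
clear Hs.
set T := trunc_log 2 m.
have T1 : 2 ^ T <= m by apply: trunc_logP.
have T2 : m < 2 ^ T.+1 by apply: trunc_log_ltn.
set r := T.+3.
have Er : 2 ^ r = 8 * 2 ^ T by rewrite /r !expnS; lia.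
have E2 : 2 ^ T.+1 = 2 * 2 ^ T by rewrite expnS.
set j := (2 ^ r) %/ m + 1.
have Hj1 : 2 ^ r < j * m by rewrite /j; lia.
have Hj2 : j * m <= 2 ^ r + m by rewrite /j; lia.
have Hj9 : j <= 9.
  by rewrite -(leq_pmul2r m0); lia.
set f := fun i => take m (drop (i * m) (mkseq (fun j0 => xw (0 + j0)) (11 * m))).
have Efx : (fun j0 => xw (0 + j0)) = xw by [].
have Hf : forall i, j <= i <= j + 1 -> f i = nseq m r.
  move=> i Hi; rewrite /f Efx block_eq; last by nia.
  apply: (@eq_from_nth _ 0); rewrite ?size_mkseq ?size_nseq // => t Ht.
  rewrite nth_mkseq // nth_nseq Ht /xw; apply: trunc_log_eq => //.
  rewrite expnS; apply/andP; split; nia.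
move: Hu; rewrite /prefix_of /subword -/f => Hu.
have E11 : iota 0 11 = iota 0 j ++ j :: j.+1 :: iota (j.+2) (9 - j).
  have -> : j :: j.+1 :: iota j.+2 (9 - j) = iota (0 + j) (11 - j).
    by rewrite add0n; have -> : 11 - j = (9 - j).+2 by lia.
  by rewrite -iotaD; congr iota; lia.
move: Hu; rewrite E11 map_cat cat_uniq /= -/(f j) -/(f j.+1).
rewrite (Hf j) ?(Hf j.+1) ?in_cons ?eqxx ?orbT ?andbF //; lia.

Qed.
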